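(* Let $P$ be any poset. Then there exists no strictly isotone map $f:\mathrm{ch}\text{-}\mathrm{Id}(P)\to P$. Consequently, there exists no embedding of posets $f:\mathrm{Id}(P)\to P$.
   Context: For a poset $P$ and a subset $X\subseteq P$, write $P\downarrow X=\{y\in P\mid \exists x\in X,\ y\le x\}$. A downset of $P$ is a subset $d$ with $x\le y\in d\Rightarrow x\in d$. An ideal of $P$ is a (possibly empty) upward directed downset of $P$ (upward directed: every two elements have a common upper bound in the set). $\mathrm{Id}(P)$ denotes the set of all ideals of $P$ (including $\emptyset$), partially ordered by inclusion. $\mathrm{ch}\text{-}\mathrm{Id}(P)$ denotes the subposet of $\mathrm{Id}(P)$ consisting of the ideals of the form $P\downarrow C$ with $C\subseteq P$ a chain (possibly empty). A map $f:P\to Q$ of posets is strictly isotone if $x<y$ in $P$ implies $f(x)<f(y)$ in $Q$. *)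

(* Defs.v *)
From mathcomp Require Import all_boot all_order.
Set Implicit Arguments. Unset Strict Implicit. Unset Printing Implicit Defensive.
Import Order.TTheory.
Local Open Scope order_scope.

Section PosetIdeals.
Context {d : Order.disp_t} {P : porderType d}.

Definition subset_of (X Y : P -> Prop) : Prop := forall x, X x -> Y x.

Definition psubset_of (X Y : P -> Prop) : Prop := subset_of X Y /\ ~ subset_of Y X.

Definition down_of (X : P -> Prop) : P -> Prop := fun y => exists x, X x /\ y <= x.

Definition is_downset (X : P -> Prop) : Prop :=
  forall x y : P, x <= y -> X y -> X x.

Definition up_directed (X : P -> Prop) : Prop :=
  forall x y : P, X x -> X y -> exists z, [/\ X z, x <= z & y <= z].

(* ideal: possibly empty upward directed downset *)
Definition is_ideal (X : P -> Prop) : Prop := is_downset X /\ up_directed X.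

Definition is_chain (C : P -> Prop) : Prop :=
  forall x y : P, C x -> C y -> x <= y \/ y <= x.

Definition is_ch_ideal (X : P -> Prop) : Prop :=
  is_ideal X /\ exists C, is_chain C /\ (forall y, X y <-> down_of C y).

End PosetIdeals.

(* Id(P) and ch-Id(P), ordered by inclusion of the underlying subsets *)
Definition Id_P {d : Order.disp_t} (P : porderType d) := {X : P -> Prop | is_ideal X}.
Definition chId_P {d : Order.disp_t} (P : porderType d) := {X : P -> Prop | is_ch_ideal X}.

Definition strictly_isotone_chId {d : Order.disp_t} {P : porderType d}
  (f : chId_P P -> P) : Prop :=
  forall X Y : chId_P P, psubset_of (proj1_sig X) (proj1_sig Y) -> (f X < f Y)%O.

Definition poset_embedding_Id {d : Order.disp_t} {P : porderType d}
  (f : Id_P P -> P) : Prop :=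
  forall X Y : Id_P P, subset_of (proj1_sig X) (proj1_sig Y) <-> (f X <= f Y)%O.

(* Main.v *)
Require Import Defs.
From mathcomp Require Import all_boot all_order.
From Stdlib Require Import Classical FunctionalExtensionality PropExtensionality.
Import Order.TTheory.
Local Open Scope order_scope.

Section Main.
Context {d : Order.disp_t} {P : porderType d}.
Variable f : chId_P P -> P.
Hypothesis fH : strictly_isotone_chId f.

Lemma chain_ideal (C : P -> Prop) : is_chain C -> is_ch_ideal (down_of C).
Proof.
move=> hC; split; last by exists C; split.
split.
- move=> x y hxy [c [Cc hyc]]; exists c; split => //; exact: le_trans hxy hyc.
- move=> x y [c1 [C1 h1]] [c2 [C2 h2]].
  case: (hC _ _ C1 C2) => h12.
  + exists c2; split => //; [by exists c2; split | exact: le_trans h1 h12].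
  + exists c1; split => //; [by exists c1; split | exact: le_trans h2 h12].
Qed.

Definition chn (C : P -> Prop) : P -> Prop := fun x => is_chain C /\ C x.
Lemma chn_chain C : is_chain (chn C).
Proof. move=> x y [hC Cx] [_ Cy]; exact: hC. Qed.

Definition F (C : P -> Prop) : P :=
  f (exist _ (down_of (chn C)) (@chain_ideal (chn C) (chn_chain C))).

Lemma F_lt (C D : P -> Prop) : is_chain C -> is_chain D ->
  subset_of C D -> (exists y, D y /\ ~ down_of C y) -> F C < F D.
Proof.
move=> hC hD sCD [y [Dy ny]]; apply: fH => /=; split.
- move=> x [c [[_ Cc] h]]; exists c; split => //; split => //; exact: sCD.
- move=> H; apply: ny.
  have [c [[_ Cc] h]] : down_of (chn C) y by apply: H; exists y; split.
  by exists c.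
Qed.

Definition sub (A B : P -> Prop) := forall x, A x -> B x.
Definition g (C : P -> Prop) : P -> Prop := fun x => C x \/ x = F C.
Definition Union (K : (P -> Prop) -> Prop) : P -> Prop :=
  fun x => exists A, K A /\ A x.
Definition chainK (K : (P -> Prop) -> Prop) :=
  forall A B, K A -> K B -> sub A B \/ sub B A.
Definition closed (S : (P -> Prop) -> Prop) :=
  (forall C, S C -> S (g C)) /\
  (forall K, (forall A, K A -> S A) -> chainK K -> S (Union K)).
Definition T (X : P -> Prop) := forall S, closed S -> S X.

Lemma T_closed : closed T.
Proof.
split.
- move=> C TC S hS; apply: (proj1 hS); exact: TC.
- move=> K hK cK S hS; apply: (proj2 hS) => // A KA; exact: hK.
Qed.

Lemma T_ind (S : (P -> Prop) -> Prop) :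
  (forall C, T C -> S C -> S (g C)) ->
  (forall K, (forall A, K A -> T A /\ S A) -> chainK K -> S (Union K)) ->
  forall C, T C -> S C.
Proof.
move=> h1 h2 C TC.
suff : T C /\ S C by case.
apply: (TC (fun X => T X /\ S X)); split.
- move=> A [TA SA]; split; [exact: (proj1 T_closed) | exact: h1].
- move=> K hK cK; split; last exact: h2.
  apply: (proj2 T_closed) => // A KA; exact: (proj1 (hK A KA)).
Qed.

Lemma set_ext (A B : P -> Prop) : sub A B -> sub B A -> A = B.
Proof.
move=> h1 h2; apply: functional_extensionality => x.
apply: propositional_extensionality; split; [exact: h1 | exact: h2].
Qed.

Definition extreme C := forall A, T A -> sub A C \/ sub C A.

Lemma M_all C : T C -> extreme C -> forall A, T A -> sub A C \/ sub (g C) A.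
Proof.
move=> TC eC; apply: T_ind.
- move=> A TA [h|h].
  + case: (eC _ ((proj1 T_closed) _ TA)) => h'; first by left.
    case: (classic (C (F A))) => hF.
    * left => x [Ax|->]; [exact: h | exact: hF].
    * have eq : A = C.
        apply: set_ext => // x Cx; case: (h' x Cx) => // ex.
        by exfalso; apply: hF; rewrite -ex.
      by subst A; right => x.
  + right => x hx; left; exact: h.
- move=> K hK cK.
  case: (classic (exists A, K A /\ sub (g C) A)) => [[A [KA h]]|hn].
  + right => x hx; exists A; split => //; exact: h.
  + left => x [A [KA Ax]].
    case: (proj2 (hK A KA)) => h; first exact: h.
    by exfalso; apply: hn; exists A.
Qed.

Lemma all_extreme : forall C, T C -> extreme C.
Proof.
apply: T_ind.
- move=> C TC eC A TA.
  case: (@M_all C TC eC A TA) => h; last by right.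
  left => x Ax; left; exact: h.
- move=> K hK cK A TA.
  case: (classic (exists B, K B /\ sub A B)) => [[B [KB h]]|hn].
  + left => x Ax; exists B; split => //; exact: h.
  + right => x [B [KB Bx]].
    case: (proj2 (hK B KB) A TA) => h; first by exfalso; apply: hn; exists B.
    exact: h.
Qed.

Definition Inv (C : P -> Prop) :=
  is_chain C /\ forall x, C x -> exists D, [/\ is_chain D, sub D C, x = F D & ~ down_of D x].


Lemma Inv_below C : Inv C -> forall y, C y -> y < F C.
Proof.
move=> [hC hI] y Cy.
have [D [hD sD ey nD]] := hI y Cy.
rewrite ey; apply: F_lt => //.
by exists y; split => //; rewrite -ey.
Qed.

Lemma all_Inv : forall C, T C -> Inv C.
Proof.
apply: T_ind.
- move=> C _ IC; have hb := @Inv_below C IC; case: IC => hC hI; split.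
  + move=> x y [Cx|->] [Cy|->].
    * exact: hC.
    * by left; apply: ltW; apply: hb.
    * by right; apply: ltW; apply: hb.
    * by left.
  + move=> x [Cx|->].
    * have [D [hD sD ex nD]] := hI x Cx.
      exists D; split => // z Dz; left; exact: sD.
    * exists C; split => //; first by move=> z Cz; left.
      move=> [y [Cy le]]; have := hb y Cy.
      by rewrite lt_neqAle => /andP [_ h]; move: (le_anti (introT andP (conj le h))) (hb y Cy) => -> ; rewrite ltxx.
- move=> K hK cK; split.
  + move=> x y [A [KA Ax]] [B [KB By]].
    case: (cK A B KA KB) => h.
    * exact: (proj1 (proj2 (hK B KB))) x y (h x Ax) By.
    * exact: (proj1 (proj2 (hK A KA))) x y Ax (h y By).
  + move=> x [A [KA Ax]].
    have [D [hD sD ex nD]] := proj2 (proj2 (hK A KA)) x Ax.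
    exists D; split => // z Dz; exists A; split => //; exact: sD.
Qed.

Lemma contra : False.
Proof.
pose U := Union T.
have TU : T U.
  apply: (proj2 T_closed) => // A B TA TB; by case: (@all_extreme A TA B TB); [right|left].
have TgU : T (g U) := proj1 T_closed _ TU.
have UF : U (F U) by exists (g U); split => //; right.
have [hU hI] := @all_Inv U TU.
have [D [hD sD ex nD]] := hI _ UF.
have : F D < F U.
  apply: F_lt => //; exists (F U); split => //.
by rewrite -ex ltxx.
Qed.

End Main.

Theorem theorem2p1 (d : Order.disp_t) (P : porderType d) :
  (~ exists f : chId_P P -> P, strictly_isotone_chId f) /\
  (~ exists f : Id_P P -> P, poset_embedding_Id f).
Proof.
split.
- by move=> [f fH]; exact: (@contra d P f fH).
- move=> [f fH].
  pose f' (X : chId_P P) : P := f (exist _ (proj1_sig X) (proj1 (proj2_sig X))).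
  apply: (@contra d P f') => X Y [h1 h2].
  rewrite /f' lt_neqAle; apply/andP; split.
  + apply/eqP => e; apply: h2.
    apply/(fH (exist _ (proj1_sig Y) (proj1 (proj2_sig Y)))
              (exist _ (proj1_sig X) (proj1 (proj2_sig X)))).
    by rewrite e.
  + exact/(fH (exist _ (proj1_sig X) (proj1 (proj2_sig X)))
              (exist _ (proj1_sig Y) (proj1 (proj2_sig Y)))).
Qed.
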